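(* Let $(\Omega,\mathcal{F},\mathbb{P})$ be a probability space. The set $\mathbb{L}^0_+$ is locally convex for the $\mathbb{L}^0$-topology (every element has a neighbourhood base, for the relative $\mathbb{L}^0$-topology on $\mathbb{L}^0_+$, consisting of convex sets) if and only if the probability space is purely atomic. In this case, there exists a probability $\mathbb{Q}$ equivalent to $\mathbb{P}$ such that the $\mathbb{L}^0$-topology on $\mathbb{L}^0_+$ coincides with the $\mathbb{L}^1(\mathbb{Q})$-topology on $\mathbb{L}^0_+$ if and only if the probability space has only finitely many atoms (and then any $\mathbb{Q}$ equivalent to $\mathbb{P}$ works).
   Context: $\mathbb{L}^0$ is the space of (equivalence classes modulo $\mathbb{P}$-null sets of) real-valued random variables with the topology of convergence in probability, metrized by $(X,Y)\mapsto\mathbb{E}_{\mathbb{P}}[1\wedge|X-Y|]$; $\mathbb{L}^0_+$ are its nonnegative elements. *)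

(* Defs.v *)
From HB Require Import structures.
From mathcomp Require Import all_boot all_order all_algebra.
From mathcomp Require Import all_classical all_reals all_analysis.
Set Implicit Arguments. Unset Strict Implicit. Unset Printing Implicit Defensive.
Import Order.TTheory GRing.Theory Num.Theory.
Import numFieldNormedType.Exports.
Local Open Scope classical_set_scope.
Local Open Scope ring_scope.

Section L0.
Context {d : measure_display} {T : measurableType d} {R : realType}.

(* Elements of L^0_+ are represented by measurable real functions that are
   P-a.e. nonnegative; all notions below are invariant under P-a.e. equality. *)
Definition L0plus (P : probability T R) : set (T -> R) :=
  [set X : T -> R | measurable_fun setT X /\ {ae P, forall w, 0 <= X w}].

Definition dist0 (P : probability T R) (X Y : T -> R) : \bar R :=
  (\int[P]_(w in setT) (Num.min 1 `|X w - Y w|)%:E)%E.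

Definition dist1 (Q : probability T R) (X Y : T -> R) : \bar R :=
  (\int[Q]_(w in setT) (`|X w - Y w|)%:E)%E.

Definition nbhd0 (P : probability T R) (X : T -> R) (N : set (T -> R)) : Prop :=
  N `<=` L0plus P /\
  exists e : R, 0 < e /\
    [set Y | L0plus P Y /\ (dist0 P X Y < e%:E)%E] `<=` N.

Definition nbhd1 (P Q : probability T R) (X : T -> R) (N : set (T -> R)) : Prop :=
  N `<=` L0plus P /\
  exists e : R, 0 < e /\
    [set Y | L0plus P Y /\ (dist1 Q X Y < e%:E)%E] `<=` N.

Definition convex_set (C : set (T -> R)) : Prop :=
  forall X Y, C X -> C Y -> forall l : R, 0 <= l -> l <= 1 ->
    C (fun w => l * X w + (1 - l) * Y w).

Definition L0plus_locally_convex (P : probability T R) : Prop :=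
  forall X, L0plus P X -> forall N, nbhd0 P X N ->
    exists V, convex_set V /\ V `<=` N /\ nbhd0 P X V.

Definition atom (P : probability T R) (A : set T) : Prop :=
  measurable A /\ (0 < P A)%E /\
  forall B, measurable B -> B `<=` A -> P B = 0%E \/ P B = P A.

Definition purely_atomic (P : probability T R) : Prop :=
  forall A, measurable A -> (0 < P A)%E -> exists B, B `<=` A /\ atom P B.

(* finitely many atoms, atoms being identified up to P-null sets *)
Definition finitely_many_atoms (P : probability T R) : Prop :=
  exists (n : nat) (A : 'I_n -> set T), (forall i, atom P (A i)) /\
    forall B, atom P B -> exists i, P ((B `\` A i) `|` (A i `\` B)) = 0%E.

Definition equiv_prob (Q P : probability T R) : Prop :=
  forall A, measurable A -> (P A = 0%E <-> Q A = 0%E).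

Definition same_topology_L0plus (P Q : probability T R) : Prop :=
  forall X, L0plus P X -> forall N, nbhd0 P X N <-> nbhd1 P Q X N.

End L0.

(* Main.v *)
Require Import Defs.
From HB Require Import structures.
From mathcomp Require Import all_boot all_order all_algebra.
From mathcomp Require Import all_classical all_reals all_analysis.
From mathcomp Require Import ring lra.
From mathcomp Require Import measurable_realfun.
Set Implicit Arguments. Unset Strict Implicit. Unset Printing Implicit Defensive.
Import Order.TTheory GRing.Theory Num.Theory.
Import numFieldNormedType.Exports.
Local Open Scope classical_set_scope.
Local Open Scope ring_scope.

Section Aux.
Context {d : measure_display} {T : measurableType d} {R : realType}.

Lemma finP (mu : probability T R) (A : set T) : measurable A ->
  mu A = (fine (mu A))%:E.
Proof. by move=> mA; rewrite fineK// fin_num_measure. Qed.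

Lemma finC (mu : probability T R) (A : set T) : measurable A ->
  (mu : {content set T -> \bar R}) A = (fine (mu A))%:E.
Proof. by move=> mA; rewrite fineK// fin_num_measure. Qed.

Lemma finM (mu : probability T R) (A : set T) : measurable A ->
  (mu : {measure set T -> \bar R}) A = (fine (mu A))%:E.
Proof. by move=> mA; rewrite fineK// fin_num_measure. Qed.

Lemma finP_ge0 (mu : probability T R) (A : set T) : 0 <= fine (mu A).
Proof. by apply: fine_ge0; exact: measure_ge0. Qed.

Lemma finP_le1 (mu : probability T R) (A : set T) : measurable A -> fine (mu A) <= 1.
Proof.
move=> mA; have := probability_le1 mu mA; rewrite (finP mu mA) lee_fin; exact.
Qed.

Lemma mset_gt (f : T -> R) (s : R) : measurable_fun setT f ->
  measurable [set w | s < f w].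
Proof.
move=> mf; have := mf measurableT _ (measurable_itv `]s, +oo[).
by rewrite setTI preimage_itvoy.
Qed.

Lemma markov_ind (mu : {measure set T -> \bar R}) (g : T -> R) (S : set T) (c : R) :
  measurable_fun setT g -> (forall w, 0 <= g w) -> measurable S -> 0 <= c ->
  (forall w, S w -> c <= g w) ->
  (c%:E * mu S <= \int[mu]_(w in setT) (g w)%:E)%E.
Proof.
move=> mg g0 mS c0 cS.
have -> : mu S = (\int[mu]_(w in setT) (\1_S w)%:E)%E by rewrite integral_indic// setIT.
rewrite -(@integralZl_indic _ _ _ mu setT measurableT (fun _ => S) c) //; last first.
  by move=> /lt_le_trans /(_ c0); rewrite ltxx.
apply: ge0_le_integral => //.
- by move=> w _; rewrite lee_fin mulr_ge0.
- apply/measurable_EFinP; apply: measurable_funM => //.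
- exact/measurable_EFinP.
move=> w _; rewrite lee_fin /indic; case: (boolP (w \in S)) => wS /=.
  by rewrite mulr1; apply: cS; rewrite -inE.
by rewrite mulr0.
Qed.

Lemma int_le_ae (mu : probability T R) (g : T -> R) (c : R) :
  measurable_fun setT g -> (forall w, 0 <= g w) -> 0 <= c ->
  {ae mu, forall w, g w <= c} ->
  (\int[mu]_(w in setT) (g w)%:E <= c%:E)%E.
Proof.
move=> mg g0 c0 hae.
apply: (@le_trans _ _ (\int[mu]_(w in setT) (cst c w)%:E)%E).
  apply: ae_ge0_le_integral => //.
  - by move=> w _; rewrite lee_fin.
  - exact/measurable_EFinP.
  - exact/measurable_EFinP/measurable_cst.
  - by apply: filterS hae => w h _; rewrite lee_fin.
have := @integral_cst _ _ _ mu setT measurableT c%:E.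
rewrite /= => ->; rewrite probability_setT mule1.
done.
Qed.


Fixpoint allG (G : set T -> Prop) (s : seq (set T)) : Prop :=
  if s is B :: s' then G B /\ allG G s' else True.
Definition bigU (s : seq (set T)) : set T := foldr setU set0 s.

Lemma allG_cat G s1 s2 : allG G s1 -> allG G s2 -> allG G (s1 ++ s2).
Proof. by elim: s1 => //= B s1 IH [? ?] ?; split => //; apply: IH. Qed.

Lemma bigU_cat s1 s2 : bigU (s1 ++ s2) = bigU s1 `|` bigU s2.
Proof. by elim: s1 => /= [|B s1 ->]; [rewrite set0U | rewrite setUA]. Qed.

Lemma bigU_meas G s : (forall B, G B -> measurable B) -> allG G s ->
  measurable (bigU s).
Proof.
move=> hG; elim: s => //= B s IH [gB gs]; apply: measurableU; auto.
Qed.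

Lemma bigU_sub G s A : (forall B, G B -> B `<=` A) -> allG G s -> bigU s `<=` A.
Proof.
move=> hG; elim: s => [_ w []|B s IH [gB gs]] /= w [].
  exact: hG.
by move=> /IH; apply.
Qed.

Fixpoint Lr (s : nat -> seq (set T)) n :=
  if n is n'.+1 then Lr s n' ++ s n else s 0%N.

Lemma exhaust (mu : probability T R) (A : set T) (G : set T -> Prop) :
  measurable A -> (forall B, G B -> measurable B) -> (forall B, G B -> B `<=` A) ->
  (forall C, measurable C -> C `<=` A -> (0 < mu C)%E ->
     exists B, G B /\ B `<=` C /\ (0 < mu B)%E) ->
  forall eps, 0 < eps -> exists s, allG G s /\ fine (mu A) < fine (mu (bigU s)) + eps.
Proof.
move=> mA GM GA Gpos eps eps0.
apply: contrapT => /forallNP H.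
have H' : forall s, allG G s -> fine (mu (bigU s)) + eps <= fine (mu A).
  by move=> s gs; rewrite leNgt; apply/negP => h; exact: (H s).
pose E := [set r | exists s, allG G s /\ r = fine (mu (bigU s))].
have E0 : E !=set0 by exists (fine (mu (bigU [::]))); exists [::].
have Eub : ubound E (fine (mu A) - eps).
  by move=> r [s [gs ->]]; have := H' s gs; lra.
have hs : has_sup E by split => //; exists (fine (mu A) - eps).
set sig := sup E.
have sigle : sig <= fine (mu A) - eps by apply: ge_sup.
have : forall n : nat, exists s, allG G s /\ sig - (n.+1%:R)^-1 < fine (mu (bigU s)).
  move=> n; have e0 : 0 < (n.+1%:R)^-1 :> R by rewrite invr_gt0 ltr0Sn.
  have [r [s [gs ->]] hr] := @sup_adherent _ E ((n.+1%:R)^-1) e0 hs.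
  by exists s.
case/choice => s hsn.
have gL n : allG G (Lr s n).
  by elim: n => [|n IH] /=; [exact: (hsn 0%N).1 | exact: allG_cat IH (hsn n.+1).1].
pose F n := bigU (Lr s n).
have mF n : measurable (F n) := bigU_meas GM (gL n).
have FA n : F n `<=` A := bigU_sub GA (gL n).
have Fle n : fine (mu (F n)) <= sig by apply: sup_upper_bound => //; exists (Lr s n).
have Fge n : sig - (n.+1%:R)^-1 < fine (mu (F n)).
  apply: (lt_le_trans (hsn n).2).
  have sub : bigU (s n) `<=` F n.
    by case: n => [|n] //=; rewrite /F /= bigU_cat; apply: subsetUr.
  apply: fine_le; rewrite ?fin_num_measure //; first exact: bigU_meas (hsn n).1.
  by apply: le_measure => //; rewrite inE //; exact: bigU_meas (hsn n).1.
have ndF : nondecreasing_seq F.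
  by apply/nondecreasing_seqP => n; apply/subsetPset; rewrite /F /= bigU_cat; exact: subsetUl.
pose D := \bigcup_n F n.
have mD : measurable D := bigcup_measurable (fun n _ => mF n).
have muD : (mu D <= sig%:E)%E.
  have cv := @nondecreasing_cvg_mu _ _ _ mu F mF mD ndF.
  move/cvg_lim : (cv) => <- //; apply: lime_le; first by apply/cvg_ex; eexists; exact: cv.
  by apply: nearW => n /=; rewrite (finP mu (mF n)) lee_fin.
pose C := A `\` D.
have mC : measurable C := measurableD mA mD.
have muC : (0 < mu C)%E.
  have AD : A `&` D = D.
    by apply/seteqP; split => [w []//|w Dw]; split => //; case: Dw => n _ /FA.
  rewrite /C measureD // ?AD; last by rewrite ltey_eq fin_num_measure.
  rewrite (finC mu mA) (finC mu mD) -EFinB lte_fin.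
  move: muD; rewrite (finP mu mD) lee_fin; lra.
have [B [gB [BC Bpos]]] := Gpos C mC (fun w (h : C w) => h.1) muC.
have mB := GM B gB.
have key n : fine (mu (F n)) + fine (mu B) <= sig.
  have gl : allG G (Lr s n ++ [:: B]) by apply: allG_cat.
  have := sup_upper_bound hs (ex_intro _ _ (conj gl erefl)).
  have disj : F n `&` B = set0.
    apply/seteqP; split => w // [Fw Bw]; have [_ nD] := BC w Bw; apply: nD; exists n => //.
  rewrite bigU_cat /= setU0 (measureU mu (mF n) mB disj).
  by rewrite (finC mu (mF n)) (finC mu mB) -EFinD.
have bpos : 0 < fine (mu B) by move: Bpos; rewrite (finP mu mB) lte_fin.
pose n := Num.truncn ((fine (mu B))^-1).
have hn : (fine (mu B))^-1 < n.+1%:R := truncnS_gt _.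
have : (n.+1%:R)^-1 < fine (mu B).
  rewrite -[X in _ < X]invrK ltf_pV2 ?posrE ?invr_gt0 //.
move: (key n) (Fge n); set x := (n.+1%:R)^-1; set y := fine (mu (F n)).
set b := fine (mu B); lra.
Qed.

Section Real.
Variable mu : probability T R.
Local Notation p A := (fine (mu A)).

Lemma p0 A : measurable A -> (mu A = 0)%E <-> p A = 0.
Proof. by move=> mA; split => [h|h]; [rewrite h | rewrite (finP mu mA) h]. Qed.

Lemma ppos A : measurable A -> (0 < mu A)%E <-> 0 < p A.
Proof. by move=> mA; rewrite [X in (_ < X)%E](finP mu mA) lte_fin. Qed.

Lemma peq A B : measurable A -> measurable B -> mu A = mu B <-> p A = p B.
Proof.
by move=> mA mB; split => [h|h]; [rewrite h | rewrite (finP mu mA) (finP mu mB) h].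
Qed.

Lemma ple A B : measurable A -> measurable B -> A `<=` B -> p A <= p B.
Proof.
move=> mA mB AB; have := @le_measure _ _ _ mu A B; rewrite !inE => /(_ mA mB AB).
by rewrite (finC mu mA) (finC mu mB) lee_fin.
Qed.

Lemma pT : p setT = 1.
Proof. by rewrite probability_setT. Qed.

Lemma pD A B : measurable A -> measurable B -> p (A `\` B) = p A - p (A `&` B).
Proof.
move=> mA mB; have mI := measurableI _ _ mA mB.
have := measureDI mu mA mB.
rewrite (finC mu mA) (finC mu mI) (finC mu (measurableD mA mB)) -EFinD.
by case=> ->; rewrite addrK.
Qed.

Lemma pC A : measurable A -> p (~` A) = 1 - p A.
Proof. by move=> mA; rewrite -setTD pD // setTI pT. Qed.

Lemma pU A B : measurable A -> measurable B -> p (A `|` B) <= p A + p B.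
Proof.
move=> mA mB; have := measureU2 mu mA mB.
by rewrite (finC mu mA) (finC mu mB) (finC mu (measurableU _ _ mA mB)) -EFinD lee_fin.
Qed.

Lemma pUd A B : measurable A -> measurable B -> A `&` B = set0 ->
  p (A `|` B) = p A + p B.
Proof.
move=> mA mB AB; have := measureU mu mA mB AB.
by rewrite (finC mu mA) (finC mu mB) (finC mu (measurableU _ _ mA mB)) -EFinD; case.
Qed.

Lemma pge0 A : 0 <= p A. Proof. exact: finP_ge0. Qed.
Lemma ple1 A : measurable A -> p A <= 1. Proof. exact: finP_le1. Qed.

End Real.

Lemma allG_W G1 G2 s : (forall B, G1 B -> G2 B) -> allG G1 s -> allG G2 s.
Proof. by move=> h; elim: s => //= B s IH [? ?]; split; auto. Qed.

Lemma allG_impl G1 G2 G3 s : (forall B, G1 B -> G2 B -> G3 B) ->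
  allG G1 s -> allG G2 s -> allG G3 s.
Proof. by move=> h; elim: s => //= B s IH [? ?] [? ?]; split; auto. Qed.

Lemma allG_map (I : Type) G (A : I -> set T) r : (forall i, G (A i)) ->
  allG G (map A r).
Proof. by move=> h; elim: r => //= i r IH; split. Qed.

Lemma allG_nth G s : allG G s -> forall i : 'I_(size s), G (nth set0 s i).
Proof.
elim: s => [_ [i hi] //|B s IH [gB gs] [[|i] hi]] //=.
exact: (IH gs (Ordinal (hi : (i < size s)%N))).
Qed.

Lemma nth_allG G s : (forall i : 'I_(size s), G (nth set0 s i)) -> allG G s.
Proof.
elim: s => [|B s IH] //= h; split; first exact: (h ord0).
apply: IH => i; exact: (h (@Ordinal (size s).+1 i.+1 (ltn_ord i))).
Qed.

Definition mn (mu : probability T R) s :=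
  foldr (fun B r => Num.min (fine (mu B)) r) 1 s.

Lemma mn_pos (mu : probability T R) s : allG (fun B => 0 < fine (mu B)) s -> 0 < mn mu s.
Proof. by elim: s => //= B s IH [h1 h2]; rewrite lt_min h1 IH. Qed.

Lemma mn_le (mu : probability T R) s : allG (fun B => mn mu s <= fine (mu B)) s.
Proof.
elim: s => //= B s IH; split; first by rewrite ge_min lexx.
by apply: allG_W IH => C; apply: le_trans; rewrite ge_min lexx orbT.
Qed.

Lemma null_bigU (mu : probability T R) s S : measurable S ->
  allG (fun B => measurable B /\ fine (mu (B `&` S)) = 0) s ->
  fine (mu (bigU s `&` S)) = 0.
Proof.
move=> mS; elim: s => [|B s IH] /= h.
  by rewrite set0I measure0.
case: h => [[mB hB] hs].
have mU : measurable (bigU s) by apply: (bigU_meas (G := fun B => measurable B /\ fine (mu (B `&` S)) = 0)) hs => C [].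
apply/eqP; rewrite eq_le pge0 andbT setIUl.
have := pU mu (measurableI _ _ mB mS) (measurableI _ _ mU mS).
by rewrite hB IH // addr0.
Qed.

Lemma ae_from_null (mu : probability T R) (U : set T) (f : T -> R) (s0 : R) :
  measurable U -> measurable_fun setT f ->
  fine (mu (U `&` [set w | s0 < f w])) = 0 ->
  {ae mu, forall w, U w -> f w <= s0}.
Proof.
move=> mU mf h0.
have mS : measurable (U `&` [set w | s0 < f w]) by apply: measurableI => //; exact: mset_gt.
exists (U `&` [set w | s0 < f w]); split => //; first by apply/p0.
move=> w /= hw; split.
  by apply: contrapT => hU; apply: hw => /hU.
by rewrite ltNge; apply/negP => h; apply: hw.
Qed.

Lemma markovR (mu : probability T R) (g : T -> R) (S : set T) (c : R) :
  measurable_fun setT g -> (forall w, 0 <= g w) -> measurable S -> 0 <= c ->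
  (forall w, S w -> c <= g w) ->
  ((c * fine (mu S))%:E <= \int[mu]_(w in setT) (g w)%:E)%E.
Proof.
move=> mg g0 mS c0 cS; have := markov_ind mu mg g0 mS c0 cS.
by rewrite (finM mu mS) -EFinM.
Qed.

Lemma atom_full (P : probability T R) A S : atom P A -> measurable S ->
  fine (P (A `&` S)) <> 0 -> fine (P (A `&` S)) = fine (P A).
Proof.
move=> [mA [Apos hA]] mS h; have mAS := measurableI _ _ mA mS.
by have [/(p0 P mAS)//|/(peq P mAS mA)//] := hA _ mAS (@subIsetl _ A S).
Qed.

Lemma atom_thr (P Q : probability T R) A S : atom P A -> equiv_prob Q P ->
  measurable S -> fine (P (A `&` S)) <> 0 -> fine (Q (A `&` S)) = fine (Q A).
Proof.
move=> hA hQ mS h; have mA := hA.1.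
have e := atom_full hA mS h.
have mD := measurableD mA mS.
have : fine (P (A `\` S)) = 0 by rewrite pD // e subrr.
move/(p0 P mD)/(hQ _ mD)/(p0 Q mD); rewrite pD //.
by move/eqP; rewrite subr_eq0 => /eqP.
Qed.

Lemma indic_ge0 (A : set T) w : 0 <= \1_A w :> R.
Proof. by rewrite indicE; case: (w \in A). Qed.

Lemma indic_le1 (A : set T) w : \1_A w <= 1 :> R.
Proof. by rewrite indicE; case: (w \in A). Qed.

Lemma conv_norm (a b c l s0 : R) : 0 <= l -> l <= 1 -> `|a - b| <= s0 ->
  `|a - c| <= s0 -> `|a - (l * b + (1 - l) * c)| <= s0.
Proof.
move=> l0 l1 hb hc.
have -> : a - (l * b + (1 - l) * c) = l * (a - b) + (1 - l) * (a - c) by ring.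
have hl : 0 <= 1 - l by lra.
apply: le_trans (ler_normD _ _) _; rewrite !normrM (ger0_norm l0) (ger0_norm hl).
have h1 : l * `|a - b| <= l * s0 by apply: ler_wpM2l.
have h2 : (1 - l) * `|a - c| <= (1 - l) * s0 by apply: ler_wpM2l => //; lra.
lra.
Qed.

Lemma L0conv (P : probability T R) : Defs.convex_set (L0plus P).
Proof.
move=> X Y [mX aX] [mY aY] l l0 l1; split.
  apply: measurable_funD; apply: measurable_funM => //; exact: measurable_cst.
apply: filterS2 aX aY => w h1 h2.
by apply: addr_ge0; apply: mulr_ge0 => //; lra.
Qed.

Lemma mdiff (X Y : T -> R) : measurable_fun setT X -> measurable_fun setT Y ->
  measurable_fun setT (fun w => `|X w - Y w|).
Proof.
move=> mX mY; apply: measurableT_comp; first exact: normr_measurable.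
exact: measurable_funB.
Qed.

Lemma mmin (f : T -> R) : measurable_fun setT f ->
  measurable_fun setT (fun w => Num.min 1 (f w)).
Proof. by move=> mf; apply: measurable_minr => //; exact: measurable_cst. Qed.

Lemma PA_LC (P : probability T R) : purely_atomic P -> L0plus_locally_convex P.
Proof.
move=> PA X [mX aX] N [NL [e [e0 He]]].
have hG : forall C, measurable C -> C `<=` setT -> (0 < P C)%E ->
    exists B, atom P B /\ B `<=` C /\ (0 < P B)%E.
  move=> C mC _ Cpos; have [B [BC aB]] := PA C mC Cpos.
  by exists B; split => //; split => //; case: aB => _ [].
have e2 : 0 < e / 2 by lra.
have [s [gs hs]] := exhaust measurableT (fun B (h : atom P B) => h.1)
  (fun B _ => @subsetT _ B) hG e2.
rewrite pT in hs.
set U := bigU s.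
have mU : measurable U := bigU_meas (fun B (h : atom P B) => h.1) gs.
pose s0 := e / 4.
have s00 : 0 < s0 by rewrite /s0; lra.
pose dl := Num.min 1 s0 * mn P s.
have mnpos : 0 < mn P s.
  by apply: mn_pos; apply: allG_W gs => B [mB [Bpos _]]; exact/ppos.
have dl0 : 0 < dl by rewrite mulr_gt0 // lt_min ltr01.
pose V := [set Y | L0plus P Y /\ {ae P, forall w, U w -> `|X w - Y w| <= s0}].
exists V; split; [|split].
- move=> Y1 Y2 [L1 a1] [L2 a2] l l0 l1; split; first exact: L0conv.
  by apply: filterS2 a1 a2 => w h1 h2 Uw; apply: conv_norm; auto.
- move=> Y [LY aY]; apply: He; split => //.
  have mY := LY.1.
  have mf := mmin (mdiff mX mY).
  have mUc : measurable (~` U) := measurableC mU.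
  rewrite /dist0.
  apply: (@le_lt_trans _ _ (\int[P]_(w in setT) ((s0 + \1_(~` U) w))%:E)%E).
    apply: ae_ge0_le_integral => //.
    - exact/measurable_EFinP.
    - by move=> w _; rewrite lee_fin addr_ge0 // ?indic_ge0 //; lra.
    - apply/measurable_EFinP; apply: measurable_funD; first exact: measurable_cst.
      exact: measurable_indic.
    - apply: filterS aY => w h _; rewrite lee_fin.
      have [Uw|nUw] := pselect (U w).
        rewrite ge_min; apply/orP; right; apply: le_trans (h Uw) _.
        by rewrite lerDl indic_ge0.
      rewrite indicE mem_set // ge_min; apply/orP; left.
      by rewrite lerDr ltW.
  under eq_integral => w _ do rewrite EFinD.
  rewrite ge0_integralD //; first last.
  - exact/measurable_EFinP/measurable_indic.
  - by move=> w _; rewrite lee_fin ltW.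
  rewrite integral_indic // setIT.
  have := @integral_cst _ _ _ P setT measurableT s0%:E.
  rewrite /= => ->; rewrite probability_setT mule1.
  rewrite (finM P mUc) -EFinD lte_fin pC //.
  rewrite /s0; lra.
- split; first by move=> Y [].
  exists dl; split => // Y [LY hY]; split => //.
  have mY := LY.1.
  have mf := mdiff mX mY.
  apply: ae_from_null => //.
  have mS := mset_gt s0 mf.
  apply: null_bigU => //.
  apply: allG_impl (mn_le P s) gs => B hmn aB; split; first exact: aB.1.
  apply: contrapT => hB.
  have full := atom_full aB mS hB.
  have mBS := measurableI _ _ aB.1 mS.
  have g0 : forall w, 0 <= Num.min 1 `|X w - Y w| by move=> w; rewrite le_min ler01 normr_ge0.
  have c0 : 0 <= Num.min 1 s0 by rewrite le_min ler01 ltW.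
  have cS : forall w, (B `&` [set w | s0 < `|X w - Y w|]) w ->
      Num.min 1 s0 <= Num.min 1 `|X w - Y w|.
    move=> w [_ hw]; rewrite le_min; apply/andP; split; first by rewrite ge_min lexx.
    by rewrite ge_min; apply/orP; right; exact: ltW.
  have := markovR P (mmin mf) g0 mBS c0 cS.
  rewrite full => h1.
  have h2 := le_lt_trans h1 hY.
  move: h2; rewrite lte_fin /dl => h2.
  have : Num.min 1 s0 * mn P s <= Num.min 1 s0 * fine (P B) by apply: ler_wpM2l.
  lra.
Qed.

Lemma small_set (P : probability T R) A : measurable A ->
  (forall B, B `<=` A -> ~ atom P B) ->
  forall dl, 0 < dl -> forall C, measurable C -> C `<=` A -> 0 < fine (P C) ->
  exists D, measurable D /\ D `<=` C /\ 0 < fine (P D) /\ fine (P D) < dl.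
Proof.
move=> mA noat dl dl0 C mC CA Cpos.
have half : forall k : nat, exists D, measurable D /\ D `<=` C /\
    0 < fine (P D) /\ (2 ^+ k) * fine (P D) <= fine (P C).
  elim => [|k [D [mD [DC [Dpos Dk]]]]].
    by exists C; split => //; split => //; split => //; rewrite expr0 mul1r.
  have [E [mE [ED [h1 h2]]]] : exists E, measurable E /\ E `<=` D /\
      fine (P E) <> 0 /\ fine (P E) <> fine (P D).
    apply: contrapT => hn; apply: (noat D (subset_trans DC CA)); split => //.
    split; first exact/ppos.
    move=> E mE ED; apply: contrapT => hh; apply: hn; exists E; split => //; split => //.
    split.
      by move=> /(p0 P mE) ?; apply: hh; left.
    by move=> /(peq P mE mD) ?; apply: hh; right.
  have Ele := ple P mE mD ED.
  have Ege := pge0 P E.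
  have mDE := measurableD mD mE.
  have DE : D `&` E = E.
    by apply/seteqP; split => [w []//|w Ew]; split => //; apply: ED.
  have DEe : fine (P (D `\` E)) = fine (P D) - fine (P E) by rewrite pD // DE.
  have k0 : 0 <= 2 ^+ k :> R by apply: exprn_ge0.
  have [hE|hE] := leP (fine (P E)) (fine (P D) / 2).
    exists E; split => //; split; first exact: subset_trans ED DC.
    have Epos : 0 < fine (P E) by rewrite lt_neqAle Ege andbT eq_sym; apply/eqP.
    split => //; rewrite exprSr -mulrA; apply: le_trans Dk; apply: ler_wpM2l => //; lra.
  exists (D `\` E); split => //; split; first by move=> w [/DC].
  have Elt : fine (P E) < fine (P D) by rewrite lt_neqAle Ele andbT; apply/eqP.
  rewrite DEe; split; first lra.
  rewrite exprSr -mulrA; apply: le_trans Dk; apply: ler_wpM2l => //; lra.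
pose m := Num.truncn (dl^-1).
have [D [mD [DC [Dpos Dk]]]] := half m.
exists D; split => //; split => //; split => //.
have hm : dl^-1 < m.+1%:R := truncnS_gt _.
have h2 : (m.+1%:R : R) <= 2 ^+ m.
  by rewrite -natrX ler_nat; apply: ltn_expl.
have C1 := ple1 P mC.
have xdl : dl * dl^-1 = 1 by rewrite mulfV // gt_eqF.
set x := dl^-1 in hm xdl; set y := (2 ^+ m : R) in h2 Dk.
have hxy : x < y by lra.
have h3 : fine (P D) * x < fine (P D) * y by rewrite ltr_pM2l.
have h4 : fine (P D) * x < 1 by rewrite mulrC in Dk; lra.
have -> : fine (P D) = fine (P D) * x * dl by rewrite -mulrA [x * dl]mulrC xdl mulr1.
by rewrite -[X in _ < X]mul1r ltr_pM2r.
Qed.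

Definition sumi (c : R) (t : seq (set T)) (w : T) :=
  foldr (fun B r => c * \1_B w + r) 0 t.

Lemma sumi_ge0 c t w : 0 <= c -> 0 <= sumi c t w.
Proof.
move=> c0; elim: t => //= B t IH; apply: addr_ge0 => //.
exact: mulr_ge0 (indic_ge0 _ _).
Qed.

Lemma sumi_ge c t w : 0 <= c -> bigU t w -> c <= sumi c t w.
Proof.
move=> c0; elim: t => //= B t IH [Bw|tw].
  rewrite indicE mem_set // mulr1 lerDl; exact: sumi_ge0.
apply: le_trans (IH tw) _; rewrite lerDr.
exact: mulr_ge0 (indic_ge0 _ _).
Qed.

Lemma sumi_meas c t : allG (fun B => measurable B) t ->
  measurable_fun setT (sumi c t).
Proof.
elim: t => [_|B t IH [mB mt]] /=; first exact: measurable_cst.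
apply: measurable_funD; last exact: IH.
apply: measurable_funM; [exact: measurable_cst | exact: measurable_indic].
Qed.

Lemma LC_PA (P : probability T R) : L0plus_locally_convex P -> purely_atomic P.
Proof.
move=> LC; apply: contrapT => nPA.
have [A [mA [Apos noat]]] : exists A, measurable A /\ 0 < fine (P A) /\
    forall B, B `<=` A -> ~ atom P B.
  apply: contrapT => hn; apply: nPA => A mA Apos; apply: contrapT => hB; apply: hn.
  exists A; split => //; split; first exact/ppos.
  by move=> B BA aB; apply: hB; exists B.
pose a := fine (P A).
have a0 : 0 < a := Apos.
pose X : T -> R := fun _ => 0.
have LX : L0plus P X by split; [exact: measurable_cst | apply: aeW => w].
pose N := [set Y | L0plus P Y /\ (dist0 P X Y < (a / 2)%:E)%E].
have nN : nbhd0 P X N.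
  split; first by move=> Y [].
  by exists (a / 2); split => //; rewrite divr_gt0.
have [V [cV [VN [VL [dl [dl0 hV]]]]]] := LC X LX N nN.
pose G := fun B => measurable B /\ B `<=` A /\ fine (P B) < dl.
have hG : forall C, measurable C -> C `<=` A -> (0 < P C)%E ->
    exists B, G B /\ B `<=` C /\ (0 < P B)%E.
  move=> C mC CA /(ppos P mC) Cpos.
  have [D [mD [DC [Dpos Ddl]]]] := small_set mA noat dl0 mC CA Cpos.
  exists D; split; first by split => //; split => //; exact: subset_trans DC CA.
  by split => //; exact/ppos.
have a2 : 0 < a / 2 by rewrite divr_gt0.
have [s [gs hs]] := exhaust mA (fun B (h : G B) => h.1) (fun B (h : G B) => h.2.1) hG a2.
pose n := size s.
have hB : forall B, G B -> V (fun w => n%:R * \1_B w).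
  move=> B [mB [BA Bdl]]; apply: hV; split.
    split; first by apply: measurable_funM; [exact: measurable_cst|exact: measurable_indic].
    by apply: aeW => w; apply: mulr_ge0 (indic_ge0 _ _).
  apply: (@le_lt_trans _ _ (\int[P]_(w in setT) (\1_B w)%:E)%E).
    apply: ge0_le_integral => //.
    - apply/measurable_EFinP; apply: mmin; apply: mdiff; first exact: measurable_cst.
      by apply: measurable_funM; [exact: measurable_cst|exact: measurable_indic].
    - exact/measurable_EFinP/measurable_indic.
    move=> w _; rewrite lee_fin indicE; case: (w \in B) => /=.
      by rewrite ge_min lexx.
    by rewrite mulr0 subr0 normr0 ge_min lexx orbT.
  by rewrite integral_indic // setIT (finM P mB) lte_fin.
pose avg t w := (size t)%:R^-1 * sumi n%:R t w.
have Havg : forall t, t != [::] -> allG G t -> V (avg t).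
  elim => [//|B t IH] _ /= [gB gt].
  case: t IH gt => [|B' t'] IH gt.
    have -> : avg [:: B] = (fun w => n%:R * \1_B w).
      by apply: funext => w; rewrite /avg /sumi /= invr1 mul1r addr0.
    exact: hB.
  have k0 : (size (B' :: t'))%:R != 0 :> R by rewrite pnatr_eq0.
  have k1 : (size (B' :: t')).+1%:R != 0 :> R by rewrite pnatr_eq0.
  have l0 : 0 <= (size (B' :: t')).+1%:R^-1 :> R by rewrite invr_ge0 ler0n.
  have l1 : (size (B' :: t')).+1%:R^-1 <= 1 :> R.
    by rewrite invf_le1 ?ltr0Sn // ler1n.
  have := cV _ _ (hB B gB) (IH isT gt) _ l0 l1.
  congr V; apply: funext => w.
  rewrite /avg /sumi /= -/(sumi n%:R t' w).
  move: k0 k1; rewrite /=; set k := (size t').+1.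
  rewrite -!/(sumi _ _ _) => k0 k1.
  have -> : k.+1%:R = k%:R + 1 :> R by rewrite -natr1.
  have k2 : k%:R + 1 != 0 :> R by rewrite -natr1 in k1.
  field.
  by apply/andP.
have sne : s != [::].
  apply/eqP => s0; move: hs; rewrite s0 /= measure0 /= -/a; lra.
have [_ hd] := VN _ (Havg s sne gs).
have mU : measurable (bigU s) := bigU_meas (fun B (h : G B) => h.1) gs.
have ms : allG (fun B => measurable B) s := allG_W (fun B (h : G B) => h.1) gs.
have mavg : measurable_fun setT (avg s).
  by apply: measurable_funM; [exact: measurable_cst | exact: sumi_meas].
have n0 : 0 < n%:R :> R.
  by rewrite ltr0n lt0n size_eq0.
have g0 : forall w, 0 <= Num.min 1 `|X w - avg s w| by move=> w; rewrite le_min ler01 normr_ge0.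
have cS : forall w, bigU s w -> 1 <= Num.min 1 `|X w - avg s w|.
  move=> w Uw; rewrite le_min lexx /= /X sub0r normrN.
  have h : n%:R <= sumi n%:R s w := sumi_ge (ltW n0) Uw.
  rewrite ger0_norm /avg; last by apply: mulr_ge0; [rewrite invr_ge0 ler0n| exact: sumi_ge0 (ltW n0)].
  by rewrite -/n -[X in X <= _](mulVf (lt0r_neq0 n0)); apply: ler_wpM2l => //; rewrite invr_ge0 ltW.
have := markovR P (mmin (mdiff (measurable_cst _) mavg)) g0 mU ler01 cS.
move=> h1; have := le_lt_trans h1 hd.
rewrite mul1r lte_fin; move: hs; rewrite -/a; lra.
Qed.

Lemma sub_bigU_map (I : eqType) (A : I -> set T) r i : i \in r ->
  A i `<=` bigU (map A r).
Proof.
elim: r => //= j r IH; rewrite in_cons => /orP [/eqP ->|/IH h].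
  exact: subsetUl.
by move=> w /h; right.
Qed.

Lemma null_of_cover (P : probability T R) U S : measurable U -> measurable S ->
  fine (P (~` U)) = 0 -> fine (P (U `&` S)) = 0 -> fine (P S) = 0.
Proof.
move=> mU mS hc hi; apply/eqP; rewrite eq_le pge0 andbT.
have mUS := measurableI _ _ mU mS.
have mUc := measurableC mU.
have h := ple P mS (measurableU _ _ mUS mUc) (_ : S `<=` (U `&` S) `|` ~` U).
have := pU P mUS mUc; rewrite hc hi addr0 => h'.
apply: le_trans (h' ) ; apply: h.
by move=> w Sw; have [Uw|nUw] := pselect (U w); [left|right].
Qed.

Lemma PA_hG (P : probability T R) : purely_atomic P ->
  forall C, measurable C -> C `<=` setT -> (0 < P C)%E ->
    exists B, atom P B /\ B `<=` C /\ (0 < P B)%E.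
Proof.
move=> PA C mC _ Cpos; have [B [BC aB]] := PA C mC Cpos.
by exists B; split => //; split => //; case: aB => _ [].
Qed.

Lemma cover_null (P : probability T R) n (A : 'I_n -> set T) :
  purely_atomic P -> (forall i, atom P (A i)) ->
  (forall B, atom P B -> exists i, P ((B `\` A i) `|` (A i `\` B)) = 0%E) ->
  fine (P (~` bigU (map A (enum 'I_n)))) = 0.
Proof.
move=> PA aA hA; set U := bigU _.
have mU : measurable U := bigU_meas (fun B (h : atom P B) => h.1) (allG_map _ aA).
have mUc := measurableC mU.
apply: contrapT => h.
have Upos : (0 < P (~` U))%E.
  by apply/(ppos P mUc); rewrite lt_neqAle pge0 andbT eq_sym; apply/eqP.
have [B [BU aB]] := PA _ mUc Upos.
have [i hi] := hA B aB.
have [mAi [Apos _]] := aA i.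
have mB := aB.1.
have mBA := measurableU _ _ (measurableD mB mAi) (measurableD mAi mB).
move/(p0 P mBA): hi => hi.
have AU : A i `<=` U by apply: sub_bigU_map; rewrite mem_enum.
have : fine (P (A i)) <= 0.
  rewrite -hi; apply: ple => // w Aw; right; split => // /BU; apply; exact: AU.
by move/(ppos P mAi): Apos; lra.
Qed.

Lemma fin_same (P Q : probability T R) : purely_atomic P -> finitely_many_atoms P ->
  equiv_prob Q P -> same_topology_L0plus P Q.
Proof.
move=> PA [n [A [aA hA]]] hQ X [mX aX] N.
pose s := map A (enum 'I_n).
have gs : allG (atom P) s := allG_map _ aA.
have mU : measurable (bigU s) := bigU_meas (fun B (h : atom P B) => h.1) gs.
have Uc0 : fine (P (~` bigU s)) = 0 := cover_null PA aA hA.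
have Ppos : allG (fun B => 0 < fine (P B)) s.
  by apply: allG_W gs => B [mB [Bpos _]]; exact/ppos.
have Qpos : allG (fun B => 0 < fine (Q B)) s.
  apply: allG_W gs => B [mB [Bpos _]].
  rewrite lt_neqAle pge0 andbT eq_sym; apply/eqP => /(p0 Q mB) /(hQ _ mB) /(p0 P mB).
  by move/(ppos P mB): Bpos; lra.
split.
- move=> [NL [e [e0 He]]]; split => //.
  pose s0 := e / 2.
  have s00 : 0 < s0 by rewrite /s0; lra.
  have mnpos := mn_pos Qpos.
  exists (s0 * mn Q s); split; first exact: mulr_gt0.
  move=> Y [LY hY]; apply: He; split => //.
  have mY := LY.1.
  have mf := mdiff mX mY.
  have mS := mset_gt s0 mf.
  have PS : fine (P [set w | s0 < `|X w - Y w|]) = 0.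
    apply: (null_of_cover mU mS Uc0); apply: null_bigU => //.
    apply: allG_impl (mn_le Q s) gs => B hmn aB; split; first exact: aB.1.
    apply: contrapT => hB.
    have full := atom_thr aB hQ mS hB.
    have mBS := measurableI _ _ aB.1 mS.
    have cS : forall w, (B `&` [set w | s0 < `|X w - Y w|]) w -> s0 <= `|X w - Y w|.
      by move=> w [_ hw]; exact: ltW.
    have := markovR Q mf (fun w => normr_ge0 _) mBS (ltW s00) cS.
    rewrite full => h1.
    have := le_lt_trans h1 hY; rewrite lte_fin => h2.
    have : s0 * mn Q s <= s0 * fine (Q B) by apply: ler_wpM2l => //; exact: ltW.
    lra.
  have hae : {ae P, forall w, Num.min 1 `|X w - Y w| <= s0}.
    have := @ae_from_null P setT _ s0 measurableT mf.
    rewrite setTI => /(_ PS); apply: filterS => w /(_ I) h.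
    by rewrite ge_min h orbT.
  apply: le_lt_trans (int_le_ae (mmin mf) _ (ltW s00) hae) _.
    by move=> w; rewrite le_min ler01 normr_ge0.
  by rewrite lte_fin /s0; lra.
- move=> [NL [e [e0 He]]]; split => //.
  pose s0 := e / 2.
  have s00 : 0 < s0 by rewrite /s0; lra.
  have mnpos := mn_pos Ppos.
  exists (Num.min 1 s0 * mn P s); split.
    by apply: mulr_gt0 => //; rewrite lt_min ltr01.
  move=> Y [LY hY]; apply: He; split => //.
  have mY := LY.1.
  have mf := mdiff mX mY.
  have mS := mset_gt s0 mf.
  have PS : fine (P [set w | s0 < `|X w - Y w|]) = 0.
    apply: (null_of_cover mU mS Uc0); apply: null_bigU => //.
    apply: allG_impl (mn_le P s) gs => B hmn aB; split; first exact: aB.1.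
    apply: contrapT => hB.
    have full := atom_full aB mS hB.
    have mBS := measurableI _ _ aB.1 mS.
    have g0 : forall w, 0 <= Num.min 1 `|X w - Y w| by move=> w; rewrite le_min ler01 normr_ge0.
    have c0 : 0 <= Num.min 1 s0 by rewrite le_min ler01 ltW.
    have cS : forall w, (B `&` [set w | s0 < `|X w - Y w|]) w ->
        Num.min 1 s0 <= Num.min 1 `|X w - Y w|.
      move=> w [_ hw]; rewrite le_min; apply/andP; split; first by rewrite ge_min lexx.
      by rewrite ge_min; apply/orP; right; exact: ltW.
    have := markovR P (mmin mf) g0 mBS c0 cS.
    rewrite full => h1.
    have := le_lt_trans h1 hY; rewrite lte_fin => h2.
    have : Num.min 1 s0 * mn P s <= Num.min 1 s0 * fine (P B) by apply: ler_wpM2l.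
    lra.
  have QS : fine (Q [set w | s0 < `|X w - Y w|]) = 0.
    by apply/(p0 Q mS)/(hQ _ mS)/(p0 P mS).
  have hae : {ae Q, forall w, `|X w - Y w| <= s0}.
    have := @ae_from_null Q setT _ s0 measurableT mf.
    by rewrite setTI => /(_ QS); apply: filterS => w /(_ I).
  apply: le_lt_trans (int_le_ae mf _ (ltW s00) hae) _.
    by move=> w; rewrite normr_ge0.
  by rewrite lte_fin /s0; lra.
Qed.

Lemma dist0_ind (P : probability T R) (B : set T) (M : R) : measurable B -> 0 <= M ->
  (dist0 P (fun _ => 0%R) (fun w => M * \1_B w)%R <= (fine (P B))%:E)%E.
Proof.
move=> mB M0; rewrite /dist0.
apply: (@le_trans _ _ (\int[P]_(w in setT) (\1_B w)%:E)%E).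
  apply: ge0_le_integral => //.
  - apply/measurable_EFinP; apply: mmin; apply: mdiff; first exact: measurable_cst.
    by apply: measurable_funM; [exact: measurable_cst|exact: measurable_indic].
  - exact/measurable_EFinP/measurable_indic.
  move=> w _; rewrite lee_fin indicE; case: (w \in B) => /=.
    by rewrite ge_min lexx.
  by rewrite mulr0 subr0 normr0 ge_min lexx orbT.
by rewrite integral_indic // setIT (finM P mB).
Qed.

Lemma same_fin (P Q : probability T R) : purely_atomic P -> equiv_prob Q P ->
  same_topology_L0plus P Q -> finitely_many_atoms P.
Proof.
move=> PA hQ hs.
pose X : T -> R := fun _ => 0.
have LX : L0plus P X by split; [exact: measurable_cst | apply: aeW => w].
pose N := [set Y | L0plus P Y /\ (dist1 Q X Y < 1%:E)%E].
have n1 : nbhd1 P Q X N.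
  split; first by move=> Y [].
  by exists 1; split => //; move=> Y.
have [_ [dl [dl0 hd]]] := (hs X LX N).2 n1.
have [s [gs hs']] := exhaust measurableT (fun B (h : atom P B) => h.1)
  (fun B _ => @subsetT _ B) (PA_hG PA) dl0.
rewrite pT in hs'.
have mU : measurable (bigU s) := bigU_meas (fun B (h : atom P B) => h.1) gs.
exists (size s), (fun i => nth set0 s i); split; first exact: allG_nth gs.
move=> B aB; apply: contrapT => hno.
have mB := aB.1.
have hnull : allG (fun C => measurable C /\ fine (P (C `&` B)) = 0) s.
  apply: nth_allG => i; have aC := allG_nth gs i.
  set C := nth set0 s i in aC *.
  have mC := aC.1; split => //.
  apply: contrapT => hCB.
  have e1 := atom_full aC mB hCB.
  have hBC : fine (P (B `&` C)) <> 0 by rewrite setIC.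
  have e2 := atom_full aB mC hBC.
  apply: hno; exists i; rewrite -/C.
  have mD1 := measurableD mB mC; have mD2 := measurableD mC mB.
  apply/(p0 P (measurableU _ _ mD1 mD2)); apply/eqP; rewrite eq_le pge0 andbT.
  apply: le_trans (pU P mD1 mD2) _.
  by rewrite !pD // e2 e1 !subrr addr0.
have UB := null_bigU mB hnull.
have mUc := measurableC mU.
have Bsmall : fine (P B) < dl.
  have sub : B `<=` (bigU s `&` B) `|` ~` bigU s.
    by move=> w Bw; have [Uw|nUw] := pselect (bigU s w); [left|right].
  have h := ple P mB (measurableU _ _ (measurableI _ _ mU mB) mUc) sub.
  have := pU P (measurableI _ _ mU mB) mUc; rewrite UB pC // add0r => h'.
  have := le_trans h h'.
  lra.
have Bpos : 0 < fine (P B) by have [_ [/(ppos P mB) ? _]] := aB.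
have QB : 0 < fine (Q B).
  rewrite lt_neqAle pge0 andbT eq_sym; apply/eqP => /(p0 Q mB) /(hQ _ mB) /(p0 P mB).
  lra.
pose M := (fine (Q B))^-1.
have M0 : 0 <= M by rewrite invr_ge0 ltW.
pose Y := fun w => M * \1_B w.
have LY : L0plus P Y.
  split; first by apply: measurable_funM; [exact: measurable_cst|exact: measurable_indic].
  by apply: aeW => w; apply: mulr_ge0 (indic_ge0 _ _).
have [_ hY] : N Y.
  apply: hd; split => //; apply: le_lt_trans (dist0_ind P mB M0) _.
  by rewrite lte_fin.
have mY : measurable_fun setT Y := LY.1.
have cS : forall w, B w -> M <= `|X w - Y w|.
  move=> w Bw; rewrite /X /Y indicE mem_set // mulr1 sub0r normrN ger0_norm //.
have := markovR Q (mdiff (measurable_cst _) mY) (fun w => normr_ge0 _) mB M0 cS.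
move=> h1; have := le_lt_trans h1 hY.
by rewrite /M mulVf ?lte_fin ?ltxx // gt_eqF.
Qed.

End Aux.

Theorem proposition3p3 (d : measure_display) (T : measurableType d)
  (R : realType) (P : probability T R) :
  (L0plus_locally_convex P <-> purely_atomic P) /\
  (purely_atomic P ->
     ((exists Q : probability T R, equiv_prob Q P /\ same_topology_L0plus P Q)
        <-> finitely_many_atoms P) /\
     (finitely_many_atoms P ->
        forall Q : probability T R, equiv_prob Q P -> same_topology_L0plus P Q)).
Proof.
split; first by split; [exact: LC_PA | exact: PA_LC].
move=> PA; split; last by move=> hf Q hQ; exact: fin_same.
split; first by case=> Q [hQ hs]; exact: same_fin PA hQ hs.
move=> hf; exists P; split; first by move=> A mA.
exact: fin_same.
Qed.
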